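(* Let $p(x)\in\mathbb{Q}[x]$ be a polynomial with positive leading coefficient and $p(0)=0$. Then the set $\mathbb{N}\cap\{p(n):n\in\mathbb{N}\}$ is large.
   Context: A set $D\subseteq\mathbb{N}$ is $r$-large if for every $r$-coloring of $\mathbb{N}$ and every $k\ge1$ there is a monochromatic arithmetic progression $a,a+d,\dots,a+(k-1)d$ in $\mathbb{N}$ with $d\in D$; it is large if it is $r$-large for every $r\in\mathbb{N}$. (One may use the known fact that this holds for polynomials with integer coefficients, positive leading coefficient and zero constant term.) *)

(* Defs.v *)
(* Convention: N = {1,2,3,...} (positive integers), encoded as
   elements of nat that are > 0. *)
From HB Require Import structures.
From mathcomp Require Import all_boot all_order all_algebra.
Set Implicit Arguments. Unset Strict Implicit. Unset Printing Implicit Defensive.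
Import Order.TTheory GRing.Theory Num.Theory.

Definition r_large (D : nat -> Prop) (r : nat) : Prop :=
  forall (c : nat -> 'I_r) (k : nat), (0 < k)%N ->
    exists a d : nat, [/\ (0 < a)%N, D d &
      forall i : nat, (i < k)%N -> c (a + i * d)%N = c a].

Definition large (D : nat -> Prop) : Prop :=
  forall r : nat, (0 < r)%N -> r_large D r.

Definition pos_values (p : {poly rat}) : nat -> Prop :=
  fun d => (0 < d)%N /\ exists n : nat, (0 < n)%N /\ (p.[n%:R] = d%:R)%R.

(* Main.v *)
Require Import Defs.
From HB Require Import structures.
From Stdlib Require Import Wellfounded.
From mathcomp Require Import all_boot all_order all_algebra.
From mathcomp Require Import zify ring polyrcf.
Import Order.TTheory GRing.Theory Num.Theory.
Local Open Scope ring_scope.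

Definition lexR (D : nat) (v u : nat -> nat) : Prop :=
  exists d, [/\ (d <= D)%N, (v d < u d)%N & forall e, (d < e)%N -> (e <= D)%N -> v e = u e].

Lemma wf_measure T (R : T -> T -> Prop) (f : T -> nat) :
  (forall v u, R v u -> (f v < f u)%N) -> well_founded R.
Proof.
move=> H u.
suff K : forall n u, (f u < n)%N -> Acc R u by apply: (K (f u).+1).
elim=> [|n IHn] w hw; first by rewrite ltn0 in hw.
constructor => v /H hv; apply: IHn.
exact: leq_trans hv hw.
Qed.

Lemma step_lex D n : well_founded (lexR D) ->
  (forall u, (u D.+1 < n)%N -> Acc (lexR D.+1) u) ->
  forall u, (u D.+1 <= n)%N -> Acc (lexR D.+1) u.
Proof.
move=> wfD Hlt u; elim: (wfD u) => {}u _ IHu hu.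
constructor => v [d [hd hvu he]].
have [dD|dD] := leqP d D.
  have E : v D.+1 = u D.+1 by apply: he.
  apply: IHu; last by rewrite E.
  exists d; split => // e h1 h2; apply: he => //; exact: leqW.
have dE : d = D.+1 by apply/eqP; rewrite eqn_leq hd dD.
apply: Hlt; move: hvu; rewrite dE => hvu; exact: leq_trans hvu hu.
Qed.

Lemma lexR_wf D : well_founded (lexR D).
Proof.
elim: D => [|D IH].
  apply: (@wf_measure _ _ (fun u => u 0%N)) => v u [d [hd h _]].
  have d0 : d = 0%N by apply/eqP; rewrite -leqn0.
  by rewrite -d0.
have H : forall n u, (u D.+1 <= n)%N -> Acc (lexR D.+1) u.
  elim=> [|n IHn].
    apply: step_lex => // u hu; by rewrite ltn0 in hu.
  apply: step_lex => // u hu; exact: IHn.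
move=> u; exact: (H _ u (leqnn _)).
Qed.

Definition sd (g : {poly int}) (s : nat) : {poly int} :=
  g \Po ('X + (s%:Z)%:P) - (g.[s%:Z])%:P.

Lemma sdE (g : {poly int}) (s : nat) (y : int) : (sd g s).[y] = g.[y + s%:Z] - g.[s%:Z].
Proof. by rewrite /sd hornerD hornerN hornerC horner_comp hornerD hornerX hornerC. Qed.

Lemma size_gt1 (h : {poly int}) : h != 0 -> h.[0] = 0 -> (1 < size h)%N.
Proof.
move=> hn0 h0; rewrite ltnNge; apply/negP => /size1_polyC E.
by move: hn0; rewrite E -horner_coef0 h0 eqxx.
Qed.

Lemma sd_size {g : {poly int}} (s : nat) : (1 < size g)%N ->
  size (sd g s) = size g /\ lead_coef (sd g s) = lead_coef g.
Proof.
move=> Hg.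
have H2 : size ('X + (s%:Z)%:P : {poly int}) = 2%N by rewrite size_XaddC.
have Hc : size (g \Po ('X + (s%:Z)%:P)) = size g by rewrite size_comp_poly2.
have Hl : lead_coef (g \Po ('X + (s%:Z)%:P)) = lead_coef g.
  by rewrite lead_coef_comp ?H2 // lead_coefXaddC expr1n mulr1.
have Hs : (size (- (g.[s%:Z])%:P) < size (g \Po ('X + (s%:Z)%:P)))%N.
  rewrite size_polyN Hc; apply: leq_ltn_trans Hg; exact: size_polyC_leq1.
by rewrite /sd size_polyDl // lead_coefDl // Hc Hl.
Qed.

Lemma size_gt_coef (h : {poly int}) (i : nat) : h`_i != 0 -> (i < size h)%N.
Proof.
move=> hi; rewrite ltnNge; apply/negP => /leq_sizeP /(_ i (leqnn i)) E.
by rewrite E eqxx in hi.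
Qed.

Lemma size_sub_same {q p : {poly int}} {d : nat} :
  size q = d.+1 -> size p = d.+1 ->
  (size (q - p)%R <= d.+1)%N /\ (q - p)`_d = lead_coef q - lead_coef p.
Proof.
move=> sq sp; split.
  by apply: leq_trans (size_polyD _ _) _; rewrite size_polyN sq sp maxnn.
by rewrite coefB !lead_coefE sq sp.
Qed.

Lemma size_sub_eq {q p : {poly int}} {d : nat} :
  size q = d.+1 -> size p = d.+1 ->
  (size (q - p) == d.+1) = (lead_coef q != lead_coef p).
Proof.
move=> sq sp; have [H1 H2] := size_sub_same sq sp.
apply/eqP/idP.
  move=> E; rewrite -subr_eq0 -H2.
  have : (q - p) != 0 by rewrite -size_poly_eq0 E.
  by rewrite -lead_coef_eq0 lead_coefE E.
move=> Hne; apply/eqP; rewrite eqn_leq H1 /=.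
by apply: size_gt_coef; rewrite H2 subr_eq0.
Qed.

Lemma lead_sub_same {q p : {poly int}} {d : nat} :
  size q = d.+1 -> size p = d.+1 -> size (q - p) = d.+1 ->
  lead_coef (q - p) = lead_coef q - lead_coef p.
Proof.
move=> sq sp sqp; have [_ H2] := size_sub_same sq sp.
by rewrite lead_coefE sqp.
Qed.

Definition normal (P : seq {poly int}) := forall q, q \in P -> q != 0 /\ q.[0] = 0.

Definition Qfam (P : seq {poly int}) (p : {poly int}) (S : nat) : seq {poly int} :=
  [seq sd (q - p) s | q <- [seq q <- P | q != p], s <- iota 0 S.+1].

Lemma mem_QfamP P p S g : g \in Qfam P p S ->
  exists q s, [/\ q \in P, q != p, (s <= S)%N & g = sd (q - p) s].
Proof.
case/allpairsP => [[q s] [qP' sI ->]].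
have sS : (s <= S)%N by move: sI; rewrite mem_iota /=.
move: qP'; rewrite mem_filter => /andP[qp qP].
by exists q, s; split.
Qed.

Lemma mem_Qfam P p S q s : q \in P -> q != p -> (s <= S)%N -> sd (q - p) s \in Qfam P p S.
Proof.
move=> qP qp sS; apply/allpairsP; exists (q, s); split.
- by rewrite mem_filter qp.
- by rewrite mem_iota.
- by [].
Qed.

Lemma diff_size {P p q} : normal P -> p \in P -> q \in P -> q != p -> (1 < size (q - p)%R)%N.
Proof.
move=> nP pP qP qp; apply: size_gt1; first by rewrite subr_eq0.
by rewrite hornerD hornerN (proj2 (nP _ qP)) (proj2 (nP _ pP)) subr0.
Qed.

Lemma normal_Qfam P p S : normal P -> p \in P -> normal (Qfam P p S).
Proof.
move=> nP pP g /mem_QfamP [q [s [qP qp _ ->]]].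
have H := diff_size nP pP qP qp; have [H1 _] := sd_size s H.
split; first by rewrite -size_poly_gt0 H1 ltnW.
by rewrite sdE add0r subrr.
Qed.

Lemma deg_Qfam (P : seq {poly int}) (p : {poly int}) (S D : nat) : p \in P -> (forall q, q \in P -> (size q <= D.+1)%N) ->
  normal P -> forall g, g \in Qfam P p S -> (size g <= D.+1)%N.
Proof.
move=> pP HD nP g /mem_QfamP [q [s [qP qp _ ->]]].
have [-> _] := sd_size s (diff_size nP pP qP qp).
apply: leq_trans (size_polyD _ _) _; rewrite size_polyN geq_max.
by rewrite HD ?HD.
Qed.

Definition lcs (P : seq {poly int}) (e : nat) : seq int :=
  undup [seq lead_coef q | q : {poly int} <- P & size q == e.+1].
Definition wt P e := size (lcs P e).

Lemma mem_lcs (P : seq {poly int}) (e : nat) (x : int) :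
  reflect (exists2 q, q \in P & size q = e.+1 /\ lead_coef q = x) (x \in lcs P e).
Proof.
rewrite /lcs mem_undup; apply: (iffP mapP) => [[q]|[q qP [sq lq]]].
  by rewrite mem_filter => /andP[/eqP sq qP] ->; exists q.
by exists q => //; rewrite mem_filter sq eqxx qP.
Qed.

Lemma mem_lcsQ (P : seq {poly int}) (p : {poly int}) (S e : nat) (x : int) : normal P -> p \in P ->
  (x \in lcs (Qfam P p S) e) <->
  (exists q, [/\ q \in P, q != p, size (q - p) = e.+1 & lead_coef (q - p) = x]).
Proof.
move=> nP pP; split.
  case/mem_lcs => g /mem_QfamP [q [s [qP qp _ ->]]] [sg lg].
  have [H1 H2] := sd_size s (diff_size nP pP qP qp).
  by exists q; split => //; rewrite -?H1 -?H2.
case=> q [qP qp sq lq]; apply/mem_lcs; exists (sd (q - p) 0).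
  exact: mem_Qfam.
by have [-> ->] := sd_size 0 (diff_size nP pP qP qp).
Qed.

Lemma uniq_size_eq (s1 s2 : seq int) : uniq s1 -> uniq s2 -> s1 =i s2 -> size s1 = size s2.
Proof. by move=> u1 u2 E; apply: perm_size; apply: uniq_perm. Qed.

Lemma wt_hi (P : seq {poly int}) (p : {poly int}) (S e : nat) : normal P -> p \in P -> (forall q, q \in P -> (size p <= size q)%N) ->
  (size p < e.+1)%N -> wt (Qfam P p S) e = wt P e.
Proof.
move=> nP pP pmin he; apply: uniq_size_eq; rewrite ?undup_uniq // => x.
apply/idP/idP.
  move/(mem_lcsQ P p S e x nP pP) => [q [qP qp sq lq]].
  have [lt|ge] := ltnP (size p) (size q).
    have E : size (q - p) = size q by rewrite size_polyDl // size_polyN.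
    apply/mem_lcs; exists q => //; split; first by rewrite -E.
    by rewrite -lq lead_coefDl // size_polyN.
  have : (size (q - p)%R <= size p)%N.
    apply: leq_trans (size_polyD _ _) _; rewrite size_polyN geq_max leqnn andbT //.
  by rewrite sq leqNgt he.
case/mem_lcs => q qP [sq lq]; apply/(mem_lcsQ P p S e x nP pP).
have lt : (size p < size q)%N by rewrite sq.
have E : size (q - p) = size q by rewrite size_polyDl // size_polyN.
exists q; split => //.
- by apply/eqP => qp; rewrite qp ltnn in lt.
- by rewrite E.
- by rewrite -lq lead_coefDl // size_polyN.
Qed.

Lemma wt_eq (P : seq {poly int}) (p : {poly int}) (S d : nat) : normal P -> p \in P -> (forall q, q \in P -> (size p <= size q)%N) ->
  size p = d.+1 -> (wt (Qfam P p S) d < wt P d)%N.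
Proof.
move=> nP pP pmin sp.
set L := lcs P d; set lp := lead_coef p.
have uL : uniq L by apply: undup_uniq.
have lpL : lp \in L by apply/mem_lcs; exists p.
have inj : injective (fun a : int => a - lp) by apply: (can_inj (subrK lp)).
have -> : wt (Qfam P p S) d = size [seq a - lp | a <- [seq a <- L | a != lp]].
  apply: uniq_size_eq; rewrite ?undup_uniq ?(map_inj_uniq inj) ?filter_uniq // => x.
  apply/idP/idP.
    move/(mem_lcsQ P p S d x nP pP) => [q [qP qp sq lq]].
    have sq' : size q = d.+1.
      apply/eqP; rewrite eqn_leq -sp pmin // andbT.
      have [//|lt] := leqP (size q) (size p).
      by move: sq; rewrite size_polyDl ?size_polyN // => E; rewrite E sp ltnn in lt.
    have Hne : lead_coef q != lp by rewrite -(size_sub_eq sq' sp) sq.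
    rewrite -lq (lead_sub_same sq' sp sq); apply: map_f.
    by rewrite mem_filter Hne; apply/mem_lcs; exists q.
  case/mapP => a; rewrite mem_filter => /andP[ane /mem_lcs [q qP [sq lq]]] ->.
  apply/(mem_lcsQ P p S d _ nP pP).
  have Hs : size (q - p) = d.+1 by apply/eqP; rewrite (size_sub_eq sq sp) lq.
  exists q; split => //.
  - by apply/eqP => qp; move: ane; rewrite -lq qp eqxx.
  - by rewrite (lead_sub_same sq sp Hs) lq.
rewrite size_map -rem_filter // size_rem //.
rewrite /wt -/L; case: (L) lpL => // a l _ /=; exact: ltnSn.
Qed.

Definition Good (P : seq {poly int}) : Prop :=
  forall r : nat, exists N : nat, forall c : int -> 'I_r,
    exists (x : int) (n : nat), [/\ (0 < n)%N, (n <= N)%N,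
      (forall q, q \in P -> `|x + q.[n%:Z]| <= N%:Z) &
      (forall q q', q \in P -> q' \in P -> c (x + q.[n%:Z]) = c (x + q'.[n%:Z]))].

Definition CaseA (P : seq {poly int}) r (c : int -> 'I_r) (M S : nat) :=
  exists (x : int) (n : nat), [/\ (0 < n)%N, (n <= S)%N,
      (forall q, q \in P -> `|x + q.[n%:Z]| <= M%:Z) &
      (forall q q', q \in P -> q' \in P -> c (x + q.[n%:Z]) = c (x + q'.[n%:Z]))].

Arguments CaseA P {r} c M S.

Definition pt (p q : {poly int}) (f : int) (s : nat) := f - p.[s%:Z] + q.[s%:Z].

Definition CaseB (P : seq {poly int}) p q0 r (c : int -> 'I_r) (u M S : nat) :=
  exists (f : int) (ss : seq nat), [/\ size ss = u,
     all (fun s => (0 < s <= S)%N) ss, `|f| <= M%:Z,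
     (forall s q, s \in ss -> q \in P -> q != p ->
        `|pt p q f s| <= M%:Z /\ c (pt p q f s) = c (pt p q0 f s)) &
     uniq [seq c (pt p q0 f s) | s <- ss]].

Arguments CaseB P p q0 {r} c u M S.

Definition Claim P p q0 r u M S :=
  forall c : int -> 'I_r, CaseA P c M S \/ CaseB P p q0 c u M S.

Lemma caseA_mono P r (c : int -> 'I_r) M S M' S' :
  (M <= M')%N -> (S <= S')%N -> CaseA P c M S -> CaseA P c M' S'.
Proof.
move=> hM hS [x [n [n0 nS hb hm]]]; exists x, n; split => //.
  exact: leq_trans hS.
move=> q qP; apply: le_trans (hb q qP) _; by rewrite lez_nat.
Qed.

Lemma caseA_shift P r (c : int -> 'I_r) M S (w : int) K :
  `|w| <= K%:Z -> CaseA P (fun t => c (w + t)) M S -> CaseA P c (K + M) S.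
Proof.
move=> hw [x [n [n0 nS hb hm]]]; exists (w + x), n; split => //.
  move=> q qP; have := hb q qP; rewrite PoszD; lia.
by move=> q q' qP q'P; rewrite -!addrA; apply: hm.
Qed.

Lemma close P p q0 r (c : int -> 'I_r) M S (f : int) (s : nat) :
  p \in P -> (0 < s <= S)%N -> `|f| <= M%:Z ->
  (forall q, q \in P -> q != p -> `|pt p q f s| <= M%:Z) ->
  (forall q, q \in P -> q != p -> c (pt p q f s) = c (pt p q0 f s)) ->
  c f = c (pt p q0 f s) -> CaseA P c M S.
Proof.
move=> pP /andP[s0 sS] hf hb hm hc; exists (f - p.[s%:Z]), s; split => //.
  move=> q qP; have [->|qp] := eqVneq q p; first by rewrite subrK.
  exact: hb.
suff H : forall q, q \in P -> c (f - p.[s%:Z] + q.[s%:Z]) = c f.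
  by move=> q q' qP q'P; rewrite !H.
move=> q qP; have [->|qp] := eqVneq q p; first by rewrite subrK.
by rewrite hc; apply: hm.
Qed.

Definition pat r M (c : int -> 'I_r) (z : int) : {ffun 'I_M.*2.+1 -> 'I_r} :=
  [ffun i : 'I_M.*2.+1 => c (z + ((i : nat)%:Z - M%:Z))].

Arguments pat {r} M c z.

Definition cm r M (c : int -> 'I_r) (z : int) := enum_rank (pat M c z).

Arguments cm {r} M c z.

Lemma pat_transfer r M (c : int -> 'I_r) z1 z2 :
  cm M c z1 = cm M c z2 -> forall t, `|t| <= M%:Z -> c (z1 + t) = c (z2 + t).
Proof.
move/enum_rank_inj => /ffunP E t ht.
have := E (inord (absz (t + M%:Z)%R)); rewrite !ffunE inordK; last by lia.
have -> : ((absz (t + M%:Z))%:Z - M%:Z) = t by lia.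
by [].
Qed.

Lemma bound_exists (g : nat -> int) (N : nat) : exists B : nat, forall y, (y <= N)%N -> `|g y| <= B%:Z.
Proof.
elim: N => [|N [B HB]].
  exists (absz (g 0%N)) => y; rewrite leqn0 => /eqP ->; lia.
exists (B + absz (g N.+1))%N => y; rewrite leq_eqVlt => /orP[/eqP ->|hy].
  lia.
have := HB y hy; lia.
Qed.

Arguments caseA_mono {P r c M S M' S'}.
Arguments caseA_shift {P r c M S w K}.

Lemma claim0 P p q0 r : Claim P p q0 r 0 0 0.
Proof. by move=> c; right; exists 0, [::]; split. Qed.

Lemma sd0E (h : {poly int}) (y : int) : h.[0] = 0 -> (sd h 0).[y] = h.[y].
Proof. by move=> h0; rewrite sdE addr0 h0 subr0. Qed.

Lemma pt_shift (p q : {poly int}) (z f : int) (s y : nat) :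
  pt p q (z + f) (s + y) = z + (sd (q - p) s).[y%:Z] + pt p q f s.
Proof.
rewrite /pt sdE !hornerD !hornerN PoszD [(y%:Z + _)]addrC; ring.
Qed.

Lemma pt_shift0 (p q : {poly int}) (z f : int) (y : nat) :
  (q - p).[0] = 0 -> pt p q (z + f) y = z + (sd (q - p) 0).[y%:Z] + f.
Proof.
move=> h0; rewrite sd0E // /pt hornerD hornerN; ring.
Qed.

Lemma ab1 {a b : int} {m n : nat} : `|a| <= m%:Z -> `|b| <= n%:Z -> `|a + b| <= (m + n)%N%:Z.
Proof. lia. Qed.
Lemma ab2 {a b : int} {m n : nat} : `|a + b| <= m%:Z -> `|b| <= n%:Z -> `|a| <= (m + n)%N%:Z.
Proof. lia. Qed.
Lemma lemono {a : int} {m m' : nat} : (m <= m')%N -> `|a| <= m%:Z -> `|a| <= m'%:Z.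
Proof. lia. Qed.

Lemma claim_step P p q0 r u M S : normal P -> p \in P -> q0 \in P -> q0 != p ->
  Good (Qfam P p S) -> Claim P p q0 r u M S -> exists M' S', Claim P p q0 r u.+1 M' S'.
Proof.
move=> nP pP q0P q0p GQ HC.
have [N' HN] := GQ #|{ffun 'I_M.*2.+1 -> 'I_r}|.
have [B HB] := bound_exists (fun y : nat => (q0 - p).[y%:Z]) N'.
have le1 : (N' + M <= N' + B + M)%N by rewrite leq_add2r leq_addr.
have le2 : (N' + B + M = (N' + B) + M)%N by [].
exists (N' + B + M)%N, (S + N')%N => c.
have [z [y [y0 yN Hz Hm]]] := HN (cm M c).
have zero q : q \in P -> (q - p).[0] = 0.
  by move=> qP; rewrite hornerD hornerN (proj2 (nP _ qP)) (proj2 (nP _ pP)) subr0.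
set g0 := sd (q0 - p) 0.
have g0Q : g0 \in Qfam P p S by apply: mem_Qfam.
have g0E : g0.[y%:Z] = (q0 - p).[y%:Z] by rewrite sd0E // zero.
set w0 := z + g0.[y%:Z].
have pat_eq : forall g, g \in Qfam P p S -> forall t, `|t| <= M%:Z ->
    c (z + g.[y%:Z] + t) = c (w0 + t).
  move=> g gQ t ht; exact: (@pat_transfer r M c _ _ (Hm g g0 gQ g0Q) t ht).
have w0b : `|w0| <= N'%:Z by apply: Hz.
have zb : `|z| <= (N' + B)%N%:Z.
  apply: (@ab2 z (g0.[y%:Z]) N' B w0b); rewrite g0E; exact: HB.
have ptb : forall g t, g \in Qfam P p S -> `|t| <= M%:Z -> `|z + g.[y%:Z] + t| <= (N' + B + M)%N%:Z.
  move=> g t gQ ht; exact: (lemono le1 (ab1 (Hz _ gQ) ht)).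
have SS : (S <= S + N')%N by rewrite leq_addr.
case: (HC (fun t => c (w0 + t))) => [A|[f [ss [Hsize Hall Hf Hsp Huniq]]]].
  by left; apply: (caseA_mono le1 SS (caseA_shift w0b A)).
case: (boolP (c (w0 + f) \in [seq c (w0 + pt p q0 f s) | s <- ss])) => Hin.
  left; case/mapP: Hin => s sS Hs.
  have Hs_all := allP Hall s sS.
  apply: (caseA_mono le1 SS (caseA_shift w0b _)).
  apply: (@close P p q0 r (fun t => c (w0 + t)) M S f s) => //.
  - by move=> q qP qp; case: (Hsp s q sS qP qp).
  - by move=> q qP qp; case: (Hsp s q sS qP qp).
right; exists (z + f), (y :: [seq (s + y)%N | s <- ss]); split.
- by rewrite /= size_map Hsize.
- rewrite /= y0 (leq_trans yN (leq_addl _ _)) /=.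
  apply/allP => s' /mapP [s sS ->]; case/andP: (allP Hall s sS) => s0 sS'.
  by rewrite addn_gt0 s0 leq_add.
- exact: ab1 zb Hf.
- move=> s' q; rewrite inE => /orP[/eqP -> | /mapP [s sS ->]] qP qp.
    have gQ : sd (q - p) 0 \in Qfam P p S by apply: mem_Qfam.
    rewrite !pt_shift0 ?zero //; split; first exact: ptb.
    by rewrite !pat_eq.
  have sS' : (s <= S)%N by case/andP: (allP Hall s sS).
  have gQ : sd (q - p) s \in Qfam P p S by apply: mem_Qfam.
  have g0Q' : sd (q0 - p) s \in Qfam P p S by apply: mem_Qfam.
  have [hb hm] := Hsp s q sS qP qp.
  have [hb0 _] := Hsp s q0 sS q0P q0p.
  rewrite !pt_shift; split; first exact: ptb.
  by rewrite !pat_eq.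
- rewrite map_cons cons_uniq.
  have H1 : c (pt p q0 (z + f) y) = c (w0 + f) by rewrite pt_shift0 ?zero // pat_eq.
  have H2 : [seq c (pt p q0 (z + f) s') | s' <- [seq (s + y)%N | s <- ss]] =
            [seq c (w0 + pt p q0 f s) | s <- ss].
    rewrite -map_comp; apply/eq_in_map => s sS.
    have sS' : (s <= S)%N by case/andP: (allP Hall s sS).
    have g0Q' : sd (q0 - p) s \in Qfam P p S by apply: mem_Qfam.
    have [hb0 _] := Hsp s q0 sS q0P q0p.
    by rewrite /= pt_shift pat_eq.
  by rewrite H1 H2 Hin.
Qed.

Lemma claim_all P p q0 r : normal P -> p \in P -> q0 \in P -> q0 != p ->
  (forall S, Good (Qfam P p S)) -> forall u, exists M S, Claim P p q0 r u M S.
Proof.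
move=> nP pP q0P q0p GQ; elim=> [|u [M [S HC]]]; first by exists 0%N, 0%N; apply: claim0.
exact: claim_step (GQ S) HC.
Qed.

Lemma focus P p q0 : normal P -> p \in P -> q0 \in P -> q0 != p ->
  (forall S, Good (Qfam P p S)) -> Good P.
Proof.
move=> nP pP q0P q0p GQ r.
have [M [S HC]] := @claim_all P p q0 r nP pP q0P q0p GQ r.
exists (maxn M S) => c.
have hM : (M <= maxn M S)%N := leq_maxl _ _.
have hS : (S <= maxn M S)%N := leq_maxr _ _.
case: (HC c) => [A|[f [ss [Hsize Hall Hf Hsp Huniq]]]].
  exact: (caseA_mono hM hS A).
have Hin : c f \in [seq c (pt p q0 f s) | s <- ss].
  apply/negPn/negP => Hn.
  have U : uniq (c f :: [seq c (pt p q0 f s) | s <- ss]) by rewrite cons_uniq Hn Huniq.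
  have := max_card (mem (c f :: [seq c (pt p q0 f s) | s <- ss])).
  by rewrite (card_uniqP U) /= size_map Hsize card_ord ltnn.
case/mapP: Hin => s sS Hs.
apply: (caseA_mono hM hS).
apply: (@close P p q0 r c M S f s) => //.
- exact: allP Hall s sS.
- by move=> q qP qp; case: (Hsp s q sS qP qp).
- by move=> q qP qp; case: (Hsp s q sS qP qp).
Qed.

Lemma good_trivial (P : seq {poly int}) (p : {poly int}) :
  (forall q, q \in P -> q = p) -> Good P.
Proof.
move=> H r; exists 1%N => c; exists (- p.[1%N%:Z]), 1%N; split => //.
  by move=> q qP; rewrite (H q qP) addNr normr0.
by move=> q q' qP q'P; rewrite (H q qP) (H q' q'P).
Qed.

Lemma exists_min {P : seq {poly int}} : P != [::] ->
  exists2 p, p \in P & forall q, q \in P -> (size p <= size q)%N.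
Proof.
elim: P => // a l IH _; case: l IH => [_|b l IH].
  by exists a => [|q]; rewrite ?mem_seq1 ?eqxx // => /eqP ->.
have [p pP pm] := IH isT.
have [ap|pa] := leqP (size a) (size p).
  exists a; first by rewrite mem_head.
  move=> q; rewrite inE => /orP[/eqP ->//|qP]; exact: leq_trans ap (pm q qP).
exists p; first by rewrite inE pP orbT.
move=> q; rewrite inE => /orP[/eqP ->|qP]; [exact: ltnW | exact: pm].
Qed.

Theorem pet D : forall P : seq {poly int}, normal P ->
  (forall q, q \in P -> (size q <= D.+1)%N) -> Good P.
Proof.
have wf := wf_inverse_image _ _ (lexR D) (fun P : seq {poly int} => wt P) (lexR_wf D).
move=> P; elim/(well_founded_induction wf): P => P IH nP HD.
have [->|Pn] := eqVneq P [::]; first by apply: (@good_trivial [::] 0).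
have [p pP pm] := exists_min Pn.
have [Hall|] := boolP (all (fun q => q == p) P).
  by apply: (@good_trivial P p) => q qP; apply/eqP; exact: (allP Hall q qP).
case/allPn => q0 q0P q0p.
apply: (@focus P p q0 nP pP q0P q0p) => S.
have pn0 : p != 0 := proj1 (nP p pP).
set d := (size p).-1.
have sp : size p = d.+1 by rewrite /d prednK // size_poly_gt0.
apply: IH; last 2 first.
- exact: normal_Qfam.
- exact: deg_Qfam.
exists d; split.
- by rewrite -ltnS -sp HD.
- exact: wt_eq.
- move=> e de eD; apply: wt_hi => //; by rewrite sp ltnS.
Qed.

Lemma clear_den (p : {poly rat}) (K : nat) : p.[0] = 0 ->
  exists (m : nat) (q : {poly int}), (K <= m)%N /\
    forall n : nat, p.[(m * n)%N%:R] = (q.[n%:Z])%:~R.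
Proof.
move=> p0.
set m1 := (\prod_(i < size p) absz (denq p`_i))%N.
have m1pos : (0 < m1)%N.
  rewrite /m1 prodn_gt0 // => i; rewrite absz_gt0; exact: lt0r_neq0 (denq_gt0 _).
set m := (m1 * K)%N.
have Hint : forall j, (j < size p)%N -> p`_j * m%:R \is a Num.int.
  move=> j hj; pose J : 'I_(size p) := Ordinal hj.
  rewrite /m /m1 (bigD1 J) //= !natrM natr_absz gtr0_norm ?denq_gt0 //.
  rewrite !mulrA -numqE; apply: rpredM; first apply: rpredM.
  - exact: rpred_int.
  - exact: rpred_nat.
  - exact: rpred_nat.
set p1 := \poly_(i < size p) (p`_i * m%:R ^+ i).
have Hp1 : p1 \is a polyOver Num.int.
  apply/polyOverP => j; rewrite coef_poly; case: ltnP => hj; last exact: rpred0.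
  case: j hj => [|j] hj.
    by rewrite -horner_coef0 p0 mul0r rpred0.
  by rewrite exprS mulrA; apply: rpredM; [exact: Hint | apply: rpredX; exact: rpred_nat].
have [q Hq] := floorpP Hp1.
exists m, q; split; first by rewrite /m leq_pmull.
move=> n.
have -> : (q.[n%:Z])%:~R = p1.[n%:R] by rewrite Hq -horner_map.
rewrite /p1 horner_poly horner_coef natrM; apply: eq_bigr => i _.
by rewrite exprMn mulrA.
Qed.

Lemma L1 (a : int) (N : nat) : `|a| <= N%:Z -> (0 < absz (a + (N.+1)%:Z)%R)%N.
Proof. lia. Qed.
Lemma L3 (x d : int) (i N : nat) : 0 < d -> `|x + d| <= N%:Z -> `|x + (i.+1)%:Z * d| <= N%:Z ->
  (absz (x + d + (N.+1)%:Z)%R + i * absz d)%N = absz (x + (i.+1)%:Z * d + (N.+1)%:Z)%R.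
Proof. nia. Qed.

Theorem mainTheorem6 (p : {poly rat}) :
  0 < lead_coef p -> p.[0] = 0 -> large (pos_values p).
Proof.
move=> lp p0 r r0 c k k0.
have [n0 Hn0] := poly_pinfty_gt_lc lp.
set K := (Num.Def.archi_bound `|n0|).+1.
have HK : `|n0| < K%:R.
  apply: lt_le_trans (archi_boundP (normr_ge0 n0)) _; by rewrite ler_nat.
have [m [q [Km Hq]]] := clear_den p K p0.
have mpos : (0 < m)%N by apply: leq_trans Km.
have qpos : forall n : nat, (0 < n)%N -> 0 < q.[n%:Z].
  move=> n n1; rewrite -(ltr0z rat) -Hq; apply: lt_le_trans lp (Hn0 _ _).
  apply: le_trans (ler_norm n0) _; apply: le_trans (ltW HK) _.
  by rewrite ler_nat; apply: leq_trans Km _; rewrite leq_pmulr.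
have q0 : q.[0] = 0.
  apply: (@intr_inj rat); have := Hq 0%N; rewrite muln0 p0 => <-; by [].
have qn0 : q != 0 by apply/eqP => E; move: (qpos 1%N isT); rewrite E horner0 ltxx.
set P := [seq (i%:Z) *: q | i <- iota 1 k].
have nP : normal P.
  move=> g /mapP [i]; rewrite mem_iota => /andP[i1 _] ->; split.
    by rewrite scale_poly_eq0 negb_or qn0 andbT; lia.
  by rewrite hornerZ q0 mulr0.
have HD : forall g, g \in P -> (size g <= (size q).+1)%N.
  move=> g /mapP [i _ ->]; apply: leq_trans (size_scale_leq _ _) _; exact: leqnSn.
have [N HN] := pet (size q) P nP HD r.
have [x [n [n1 nN Hb Hm]]] := HN (fun z : int => c (absz (z + (N.+1)%:Z)%R)).
have qiP : forall i, (i < k)%N -> (i.+1)%:Z *: q \in P.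
  by move=> i hi; apply: map_f; rewrite mem_iota; lia.
have q1P := qiP 0%N k0.
set dq := q.[n%:Z].
have dqpos : 0 < dq := qpos n n1.
have b1 := Hb _ q1P; rewrite hornerZ mul1r -/dq in b1.
exists (absz (x + dq + (N.+1)%:Z)%R), (absz dq); split.
- exact: L1.
- split; first by rewrite absz_gt0 lt0r_neq0.
  exists (m * n)%N; split; first by rewrite muln_gt0 mpos n1.
  by rewrite Hq -/dq natr_absz gtr0_norm.
- move=> i hi; have := Hm _ _ (qiP i hi) q1P; rewrite !hornerZ mul1r -/dq.
  have -> : (absz (x + dq + (N.+1)%:Z)%R + i * absz dq)%N = absz (x + (i.+1)%:Z * dq + (N.+1)%:Z)%R.
    apply: L3 => //; have := Hb _ (qiP i hi); rewrite hornerZ -/dq //.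
  by [].
Qed.
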